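(* Let $M,K\ge1$, $\mathbf{H}=[\mathbf{h}_{:1},\dots,\mathbf{h}_{:K}]\in\mathbb{C}^{M\times K}$, $P>0$, $N_0>0$, and suppose all users transmit at the same rate, $r_k=r_G$ for all $k\in\{1,\dots,K\}$. Consider the successive interference cancellation (SIC) decoding order $i_1\to i_2\to\cdots\to i_K$ constructed greedily as follows: for $u=1,\dots,K$, with $U_u=\{1,\dots,K\}\setminus\{i_1,\dots,i_{u-1}\}$ the set of not-yet-decoded users, choose $i_u\in U_u$ maximizing the signal-to-interference-plus-noise rate $R_{k}^{U_u\setminus\{k\}}$ over $k\in U_u$ (i.e., decode the user with the highest SINR at each step). Then this decoding order maximizes $|S^*_{\mathrm{SIC}}|$ over all permutations of $\{1,\dots,K\}$.
   Context: For a set $A\subseteq\{1,\dots,K\}$, $\mathbf{H}_{:A}$ is the submatrix of $\mathbf{H}$ with columns $\{\mathbf{h}_{:k}:k\in A\}$ (zero contribution if $A=\emptyset$); $\mathrm H$ denotes conjugate transpose. For a user $x$ and set $Y$, $R_x^{Y}=\log_2\det\big(\mathbf{I}_M+\frac{P}{N_0}\mathbf{h}_{:x}\mathbf{h}_{:x}^{\mathrm H}(\mathbf{I}_M+\frac{P}{N_0}\mathbf{H}_{:Y}\mathbf{H}_{:Y}^{\mathrm H})^{-1}\big)$. For a decoding order (permutation) $i_1\to\cdots\to i_K$, let $T_u=\{i_k:k>u\}$ and define $S^*_{\mathrm{SIC}}=\{i_1,\dots,i_{u^*-1}\}$ where $u^*$ is the smallest $u\in\{1,\dots,K\}$ with $r_{i_u}>R_{i_u}^{T_u}$,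 and $u^*=K+1$ if no such $u$ exists. Thus $S^*_{\mathrm{SIC}}$ is the set of users successfully decoded by SIC in that order before the first failure. The setting is a Gaussian multiple-access channel $\mathbf{y}=\mathbf{H}\mathbf{x}+\mathbf{z}$ with $K$ single-antenna transmitters of power $P$, an $M$-antenna receiver, and noise $\mathcal{CN}(0,N_0\mathbf{I}_M)$. *)

(* Defs.v *)
From HB Require Import structures.
From mathcomp Require Import all_boot all_order all_fingroup all_algebra.
From mathcomp Require Import reals exp.
From mathcomp.real_closed Require Import complex.

Set Implicit Arguments.
Unset Strict Implicit.
Unset Printing Implicit Defensive.

Import Order.TTheory GRing.Theory Num.Theory.
Local Open Scope ring_scope.

Section SIC.
Variables (R : realType) (M K : nat).

Definition ctr m n (A : 'M[R[i]]_(m, n)) : 'M[R[i]]_(n, m) :=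
  map_mx (@conjc R) A^T.

Definition log2 (x : R) : R := ln x / ln 2.

(* H_{:Y} H_{:Y}^H = sum over k in Y of h_{:k} h_{:k}^H (0 if Y is empty) *)
Definition gramY (H : 'M[R[i]]_(M, K)) (Y : {set 'I_K}) : 'M[R[i]]_M :=
  \sum_(k in Y) (col k H *m ctr (col k H)).

(* R_x^Y = log2 det (I + P/N0 h_x h_x^H (I + P/N0 H_Y H_Y^H)^{-1}).
   The determinant is real (and >= 1); we take its real part. *)
Definition rateSINR (H : 'M[R[i]]_(M, K)) (P N0 : R) (x : 'I_K)
    (Y : {set 'I_K}) : R :=
  let c : R[i] := ((P / N0)%:C)%C in
  log2 (complex.Re (\det (1%:M + c *: (col x H *m ctr (col x H))
                    *m invmx (1%:M + c *: gramY H Y)))).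

(* decoding order s : i_{u+1} = s u  (0-indexed positions u : 'I_K) *)
Definition Tset (s : 'S_K) (u : 'I_K) : {set 'I_K} :=
  [set s v | v in [set v : 'I_K | (u < v)%N]].

Definition Uset (s : 'S_K) (u : 'I_K) : {set 'I_K} :=
  [set: 'I_K] :\: [set s v | v in [set v : 'I_K | (v < u)%N]].

Definition sic_ok (H : 'M[R[i]]_(M, K)) (P N0 : R) (r : 'I_K -> R)
    (s : 'S_K) (u : 'I_K) : bool :=
  r (s u) <= rateSINR H P N0 (s u) (Tset s u).

(* 0-indexed position of the first failure (= u^* - 1), K if none *)
Definition first_fail (H : 'M[R[i]]_(M, K)) (P N0 : R) (r : 'I_K -> R)
    (s : 'S_K) : nat :=
  find (fun u => ~~ sic_ok H P N0 r s u) (enum 'I_K).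

Definition S_SIC (H : 'M[R[i]]_(M, K)) (P N0 : R) (r : 'I_K -> R)
    (s : 'S_K) : {set 'I_K} :=
  [set s u | u in [set u : 'I_K | (u < first_fail H P N0 r s)%N]].

Definition greedy_order (H : 'M[R[i]]_(M, K)) (P N0 : R) (s : 'S_K) : Prop :=
  forall u : 'I_K, forall k : 'I_K, k \in Uset s u ->
    rateSINR H P N0 k (Uset s u :\ k)
      <= rateSINR H P N0 (s u) (Uset s u :\ s u).

End SIC.

(* Main.v *)
Require Import Defs.
From HB Require Import structures.
From mathcomp Require Import all_boot all_order all_fingroup all_algebra.
From mathcomp Require Import reals exp.
From mathcomp.real_closed Require Import complex.
From mathcomp Require Import ring lra.
Import Order.TTheory GRing.Theory Num.Theory.
Local Open Scope ring_scope.
Set Implicit Arguments.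
Unset Strict Implicit.

Section LA.
Variable R : realType.
Local Notation C := (R[i]).

Lemma det1_rank1 n (u : 'cV[C]_n) (v : 'rV[C]_n) :
  \det (1%:M + u *m v) = 1 + (v *m u) 0 0.
Proof.
pose N := block_mx (1%:M : 'M[C]_n) u (-v) (1%:M : 'M[C]_1).
have e1 : N = block_mx 1%:M 0 (-v) 1%:M *m block_mx 1%:M u 0 (1%:M + v *m u).
  rewrite mulmx_block; congr block_mx.
  - by rewrite mulmx1 mul0mx addr0.
  - by rewrite mul1mx mul0mx addr0.
  - by rewrite mulmx1 mul1mx addr0.
  - by rewrite mul1mx mulNmx addrC addrK.
have e2 : N = block_mx (1%:M + u *m v) u 0 1%:M *m block_mx 1%:M 0 (-v) 1%:M.
  rewrite mulmx_block; congr block_mx.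
  - by rewrite mulmx1 mulmxN addrK.
  all: rewrite ?mulmx1 ?mul1mx ?mul0mx ?mulmx0 ?add0r ?addr0.
  all: try reflexivity.
have h1 : \det N = \det (1%:M + v *m u).
  by rewrite e1 det_mulmx det_lblock det_ublock !det1 !mul1r.
have h2 : \det N = \det (1%:M + u *m v).
  by rewrite e2 det_mulmx det_ublock det_lblock !det1 !mulr1.
by rewrite -h2 h1 det_mx11 !mxE eqxx.
Qed.

Lemma ctrM m n p (A : 'M[C]_(m, n)) (B : 'M[C]_(n, p)) :
  ctr (A *m B) = ctr B *m ctr A.
Proof. by rewrite /ctr trmx_mul map_mxM. Qed.

Lemma ctrK m n (A : 'M[C]_(m, n)) : ctr (ctr A) = A.
Proof. by apply/matrixP => i j; rewrite !mxE conjcK. Qed.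

Lemma ctrD m n (A B : 'M[C]_(m, n)) : ctr (A + B) = ctr A + ctr B.
Proof. by apply/matrixP => i j; rewrite !mxE rmorphD. Qed.

Lemma ctrB m n (A B : 'M[C]_(m, n)) : ctr (A - B) = ctr A - ctr B.
Proof. by apply/matrixP => i j; rewrite !mxE rmorphB. Qed.

Lemma ctr0 m n : ctr (0 : 'M[C]_(m, n)) = 0.
Proof. by apply/matrixP => i j; rewrite !mxE conjc0. Qed.

Lemma ctr1 n : ctr (1%:M : 'M[C]_n) = 1%:M.
Proof. by apply/matrixP => i j; rewrite !mxE eq_sym conjc_nat. Qed.

Lemma ctrZr m n (a : R) (A : 'M[C]_(m, n)) : ctr (a%:C%C *: A) = a%:C%C *: ctr A.
Proof. apply/matrixP => i j; rewrite !mxE rmorphM; congr (_ * _). by apply/eqP; rewrite eq_complex /= oppr0 !eqxx. Qed.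

Definition Q n (A : 'M[C]_n) (z : 'cV[C]_n) : C := (ctr z *m A *m z) 0 0.
Arguments Q {n}.

Lemma QD n (A B : 'M[C]_n) z : Q (A + B) z = Q A z + Q B z.
Proof. by rewrite /Q mulmxDr mulmxDl mxE. Qed.

Lemma QZ n a (A : 'M[C]_n) z : Q (a *: A) z = a * Q A z.
Proof. by rewrite /Q -scalemxAr -scalemxAl mxE. Qed.

Lemma Qsum n (I : finType) (P : pred I) (F : I -> 'M[C]_n) z :
  Q (\sum_(i | P i) F i) z = \sum_(i | P i) Q (F i) z.
Proof.
apply: (big_ind2 (fun A b => Q A z = b)) => //.
  by rewrite /Q mulmx0 mul0mx mxE.
by move=> A1 b1 A2 b2 <- <-; rewrite QD.
Qed.

Lemma Q1_ge0 n (z : 'cV[C]_n) : 0 <= Q 1%:M z.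
Proof.
rewrite /Q mulmx1 mxE; apply: sumr_ge0 => i _; rewrite !mxE mulrC.
exact: mulcJ_ge0.
Qed.

Lemma Q1_eq0 n (z : 'cV[C]_n) : Q 1%:M z = 0 -> z = 0.
Proof.
rewrite /Q mulmx1 mxE => /eqP; rewrite psumr_eq0; last first.
  by move=> i _; rewrite !mxE mulrC; exact: mulcJ_ge0.
move=> /allP H; apply/matrixP => i j; rewrite (ord1 j) mxE.
have := H i (mem_index_enum i); rewrite !mxE /= mulf_eq0 conjc_eq0.
by rewrite orbb => /eqP.
Qed.

Lemma Qrank1_ge0 n (g z : 'cV[C]_n) : 0 <= Q (g *m ctr g) z.
Proof.
have e : ctr z *m (g *m ctr g) *m z = (ctr z *m g) *m (ctr g *m z).
  by rewrite !mulmxA.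
rewrite /Q e mxE big_ord1.
have -> : (ctr z *m g) = ctr (ctr g *m z) by rewrite ctrM ctrK.
rewrite mxE mulrC [X in X^*%C]mxE; exact: mulcJ_ge0.
Qed.


Lemma mxEB m n (X Y : 'M[C]_(m, n)) i j : (X - Y) i j = X i j - Y i j.
Proof. by rewrite !mxE. Qed.

Lemma mxED m n (X Y : 'M[C]_(m, n)) i j : (X + Y) i j = X i j + Y i j.
Proof. by rewrite !mxE. Qed.

Lemma QBv n (A : 'M[C]_n) a b :
  Q A (a - b) = Q A a - (ctr a *m A *m b) 0 0 - (ctr b *m A *m a) 0 0 + Q A b.
Proof.
rewrite /Q ctrB mulmxBl !mulmxBr !mulmxBl.
rewrite (mxEB (_ - _)) (mxEB (ctr a *m A *m a)) (mxEB (ctr a *m A *m b)).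
ring.
Qed.

Lemma Qinv n (A : 'M[C]_n) (hu : A \in unitmx) (hA : ctr A = A) (h : 'cV[C]_n) :
  [/\ Q (invmx A) h = Q A (invmx A *m h),
      (ctr (invmx A *m h) *m h) 0 0 = Q A (invmx A *m h) &
      ctr (invmx A *m h) *m A = ctr h].
Proof.
have Ay : A *m (invmx A *m h) = h by rewrite mulKVmx.
have e3 : ctr (invmx A *m h) *m A = ctr h by rewrite -{2}hA -ctrM Ay.
split => //.
  by rewrite /Q -e3 -!mulmxA Ay.
by rewrite /Q -mulmxA Ay.
Qed.

Lemma Qmain n (A A' : 'M[C]_n) (hu : A \in unitmx) (hu' : A' \in unitmx)
  (hA : ctr A = A) (hA' : ctr A' = A')
  (hle : forall z, Q A z <= Q A' z) (hpos : forall z, 0 <= Q A z) (h : 'cV[C]_n) :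
  0 <= Q (invmx A') h <= Q (invmx A) h.
Proof.
have [e1 e2 e3] := Qinv hu hA h.
have [e1' e2' e3'] := Qinv hu' hA' h.
set y := invmx A *m h in e1 e2 e3.
set y' := invmx A' *m h in e1' e2' e3'.
have hpos' : forall z, 0 <= Q A' z by move=> z; exact: le_trans (hpos z) (hle z).
have Ay : A *m y = h by rewrite /y mulKVmx.
clearbody y y'.
rewrite e1' hpos' andTb.
have f1 : (ctr y' *m A *m y) 0 0 = Q A' y' by rewrite -mulmxA Ay.
have f2 : (ctr y *m A *m y') 0 0 = Q A' y'.
  by rewrite e3 /Q -e3'.
have key : Q A (y' - y) = Q A y' - Q A' y' - Q A' y' + Q A y.
  by rewrite QBv f1 f2.
have H0 := hpos (y' - y); rewrite key in H0.
rewrite e1 -subr_ge0; apply: le_trans H0 _.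
rewrite -subr_ge0.
have -> : Q A y - Q A' y' - (Q A y' - Q A' y' - Q A' y' + Q A y) = Q A' y' - Q A y'.
  by ring.
by rewrite subr_ge0.
Qed.


Lemma mxEZ m n a (X : 'M[C]_(m, n)) i j : (a *: X) i j = a * X i j.
Proof. by rewrite !mxE. Qed.

Lemma ctr_sum n (I : finType) (P : pred I) (F : I -> 'M[C]_n) :
  ctr (\sum_(i | P i) F i) = \sum_(i | P i) ctr (F i).
Proof.
apply: (big_ind2 (fun a b => ctr a = b)) => //; first exact: ctr0.
by move=> a1 b1 a2 b2 <- <-; rewrite ctrD.
Qed.

Variables (M K : nat) (H : 'M[C]_(M, K)).

Definition AY (c : R) (Y : {set 'I_K}) : 'M[C]_M := 1%:M + c%:C%C *: gramY H Y.

Lemma ctr_gram Y : ctr (gramY H Y) = gramY H Y.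
Proof. by rewrite /gramY ctr_sum; apply: eq_bigr => k _; rewrite ctrM ctrK. Qed.

Lemma ctr_AY c Y : ctr (AY c Y) = AY c Y.
Proof. by rewrite /AY ctrD ctr1 ctrZr ctr_gram. Qed.

Lemma Q_AY c Y z :
  Q (AY c Y) z = Q 1%:M z + c%:C%C * \sum_(k in Y) Q (col k H *m ctr (col k H)) z.
Proof. by rewrite /AY QD QZ /gramY Qsum. Qed.

Lemma Q1_le_AY c Y z : 0 <= c -> Q 1%:M z <= Q (AY c Y) z.
Proof.
move=> c0; rewrite Q_AY lerDl; apply: mulr_ge0; first by rewrite ler0c.
by apply: sumr_ge0 => k _; exact: Qrank1_ge0.
Qed.

Lemma Q_AY_ge0 c Y z : 0 <= c -> 0 <= Q (AY c Y) z.
Proof. by move=> c0; apply: le_trans (Q1_ge0 z) (Q1_le_AY Y z c0). Qed.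

Lemma Q_AY_mono c (Y Y' : {set 'I_K}) z : 0 <= c -> Y \subset Y' -> Q (AY c Y) z <= Q (AY c Y') z.
Proof.
move=> c0 sYY; rewrite !Q_AY lerD2l; apply: ler_wpM2l; first by rewrite ler0c.
rewrite [X in _ <= X](big_setID Y) /= (setIidPr sYY) lerDl.
by apply: sumr_ge0 => k _; exact: Qrank1_ge0.
Qed.

Lemma AY_unit c Y : 0 <= c -> AY c Y \in unitmx.
Proof.
move=> c0; rewrite unitmxE unitfE; apply/negP => /det0P [v v0 vA].
have e : Q (AY c Y) (ctr v) = 0.
  by rewrite /Q ctrK vA mul0mx mxE.
have : Q 1%:M (ctr v) = 0.
  by apply/eqP; rewrite eq_le Q1_ge0 andbT -e Q1_le_AY.
move/Q1_eq0 => /(congr1 (@ctr _ _ _)); rewrite ctrK ctr0 => v00.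
by rewrite v00 eqxx in v0.
Qed.

Lemma Re_lin (a : R) (q : C) : complex.Re (1 + a%:C%C * q) = 1 + a * complex.Re q.
Proof. by case: q => x y /=; rewrite mul0r subr0. Qed.

Lemma rate_eq (P N0 : R) x Y : rateSINR H P N0 x Y =
  log2 (1 + P / N0 * complex.Re (Q (invmx (AY (P / N0) Y)) (col x H))).
Proof.
rewrite /rateSINR /AY -scalemxAl -mulmxA scalemxAr det1_rank1 -scalemxAl mxEZ.
by rewrite Re_lin.
Qed.

Lemma rate_mono (P N0 : R) x (Y Y' : {set 'I_K}) : 0 < P -> 0 < N0 -> Y \subset Y' ->
  rateSINR H P N0 x Y' <= rateSINR H P N0 x Y.
Proof.
move=> P0 N00 sYY; rewrite !rate_eq.
have c0 : 0 < P / N0 by rewrite divr_gt0.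
have c0' := ltW c0.
have := Qmain (AY_unit Y c0') (AY_unit Y' c0') (ctr_AY _ _) (ctr_AY _ _)
  (fun z => Q_AY_mono z c0' sYY) (fun z => Q_AY_ge0 Y z c0') (col x H).
move=> /andP [q0 qle].
move: q0 qle; rewrite !lecE => /andP [_ q0] /andP [_ qle].
clear c0'; move: q0 qle c0.
move: (complex.Re (Q (invmx (AY (P / N0) Y')) (col x H))) => a.
move: (complex.Re (Q (invmx (AY (P / N0) Y)) (col x H))) => b.
move: (P / N0) => c ha hab c0.
have ca : 0 <= c * a by rewrite mulr_ge0 // ltW.
have cb : c * a <= c * b by rewrite ler_wpM2l // ltW.
have pa : 0 < 1 + c * a by lra.
have pb : 0 < 1 + c * b by lra.
rewrite /log2 ler_pM2r; last by rewrite invr_gt0 ln_gt0 // ltr1n.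
rewrite ler_ln ?posrE //.
lra.
Qed.

End LA.

Lemma T_eq_U K (s : 'S_K) (u : 'I_K) : Tset s u = Uset s u :\ s u.
Proof.
apply/setP => w; rewrite -(permKV s w); set v := (s^-1)%g w.
rewrite !inE !mem_imset; try exact: perm_inj.
rewrite !inE (inj_eq perm_inj) ltn_neqAle -leqNgt eq_sym.
by rewrite andbT.
Qed.

Section Abs.
Variables (R : realType) (K : nat) (rate : 'I_K -> {set 'I_K} -> R) (rG : R).
Hypothesis hmono : forall x (Y Y' : {set 'I_K}), Y \subset Y' -> rate x Y' <= rate x Y.

Definition okA (s : 'S_K) (u : 'I_K) : bool := rG <= rate (s u) (Tset s u).
Definition ffA (s : 'S_K) : nat := find (fun u => ~~ okA s u) (enum 'I_K).

Lemma ok_before (s : 'S_K) (v : 'I_K) : (v < ffA s)%N -> okA s v.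
Proof.
move=> hv; have := before_find v hv; rewrite nth_ord_enum.
by move/negbFE.
Qed.

Lemma fail_at (s : 'S_K) (u : 'I_K) : nat_of_ord u = ffA s -> ~~ okA s u.
Proof.
move=> hu; have hs : has (fun u => ~~ okA s u) (enum 'I_K).
  by rewrite has_find size_enum_ord -/(ffA s) -hu ltn_ord.
by have := nth_find u hs; rewrite -/(ffA s) -hu nth_ord_enum.
Qed.

Lemma card_le_imset (s s' : 'S_K) a b : (a <= b)%N ->
  (#|[set s' u | u in [set u : 'I_K | (u < a)%N]]| <=
   #|[set s u | u in [set u : 'I_K | (u < b)%N]]|)%N.
Proof.
move=> hab; rewrite !card_imset; try exact: perm_inj.
apply: subset_leq_card; apply/subsetP => v; rewrite !inE => hv.
exact: leq_trans hv hab.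
Qed.

Lemma greedy_best (s : 'S_K)
  (hs : forall u k, k \in Uset s u ->
     rate k (Uset s u :\ k) <= rate (s u) (Uset s u :\ s u)) (s' : 'S_K) :
  (ffA s' <= ffA s)%N.
Proof.
rewrite leqNgt; apply/negP => hlt.
move: (ffA s) hlt (@fail_at s) => m hlt fail_at'.
have hmK : (m < K)%N.
  apply: leq_trans hlt _.
  by have := find_size (fun u => ~~ okA s' u) (enum 'I_K); rewrite size_enum_ord.
pose u0 := Ordinal hmK.
have hfail := fail_at' u0 erefl.
set A := [set s v | v in [set v : 'I_K | (v < m)%N]].
set D := [set v : 'I_K | (v < ffA s')%N].
have [l0 hl0] : exists l : 'I_K, (l < ffA s')%N && (s' l \notin A).
  have hcard : (#|A| < #|[set s' v | v in D]|)%N.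
    rewrite !card_imset; try exact: perm_inj.
    apply: proper_card; apply/properP; split.
      apply/subsetP => v; rewrite !inE => hv; exact: ltn_trans hv hlt.
    by exists u0; rewrite !inE //= ltnn.
  have : ~~ ([set s' v | v in D] \subset A).
    apply/negP => hsub; have := subset_leq_card hsub; rewrite leqNgt hcard.
    by [].
  case/subsetPn => w /imsetP [v hv ->] hA; exists v; rewrite hA andbT.
  by move: hv; rewrite inE.
case: (@arg_minnP _ l0 (fun l : 'I_K => (l < ffA s')%N && (s' l \notin A))
  (fun l => nat_of_ord l) hl0) => l /andP [hl hlA] hmin.
have hbefore : forall v : 'I_K, (v < l)%N -> s' v \in A.
  move=> v hv; apply/negPn/negP => hvA.
  have := hmin v; rewrite (ltn_trans hv hl) hvA /= => /(_ isT).
  by rewrite leqNgt hv.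
have hU : Uset s u0 = [set: 'I_K] :\: A by [].
have hsub : Uset s u0 :\ s' l \subset Tset s' l.
  rewrite T_eq_U; apply: setSD; apply/subsetP => w; rewrite hU /Uset !in_setD !in_setT !andbT => hw.
  apply/negP => hx; have [v hv hwv] := imsetP hx; move: hv; rewrite inE => hv.
  by have := hbefore v hv; rewrite -hwv (negbTE hw).
have hin : s' l \in Uset s u0 by rewrite hU !inE hlA.
have h1 := ok_before hl.
have h2 := hmono (s' l) hsub.
have h3 := hs u0 (s' l) hin.
rewrite -T_eq_U in h3.
move: hfail h1; rewrite /okA -ltNge => h4 h1.
have := le_lt_trans (le_trans h1 (le_trans h2 h3)) h4.
by rewrite ltxx.
Qed.

End Abs.

Theorem mainTheorem2 (R : realType) (M K : nat) (hM : (0 < M)%N) (hK : (0 < K)%N)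
  (H : 'M[R[i]]_(M, K)) (P N0 : R) (hP : 0 < P) (hN0 : 0 < N0)
  (r : 'I_K -> R) (rG : R) (hr : forall k, r k = rG)
  (s : 'S_K) (hs : greedy_order H P N0 s) :
  forall s' : 'S_K, (#|S_SIC H P N0 r s'| <= #|S_SIC H P N0 r s|)%N.
Proof.
move=> s'.
have eff : forall t : 'S_K, first_fail H P N0 r t = ffA (rateSINR H P N0) rG t.
  by move=> t; rewrite /first_fail /ffA; apply: eq_find => u; rewrite /sic_ok /okA hr.
rewrite /S_SIC (eff s) (eff s').
apply: card_le_imset.
have hm : forall x (Y Y' : {set 'I_K}), Y \subset Y' ->
    rateSINR H P N0 x Y' <= rateSINR H P N0 x Y.
  by move=> x Y Y' hY; apply: rate_mono.
exact: (@greedy_best _ _ _ rG hm s hs s').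
Qed.
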